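(* Let $G\le\mathrm{Aut}(T)$ be a weakly branch group. Then the minimal compact $G$-spaces on which the $G$-action is faithful and micro-supported are exactly the highly proximal extensions of $\partial T$.
   Context: $T$ is a locally finite rooted tree, $\mathrm{Aut}(T)$ its root-fixing automorphisms, $\partial T$ its boundary (a compact $G$-space). $G$ is weakly branch if $T$ is infinite and spherically homogeneous, $G$ is transitive on each level, and for every vertex $v$ the subgroup of elements acting trivially outside the subtree below $v$ is non-trivial. An action of $G$ on a compact space $X$ is micro-supported if for every non-empty open $U\subset X$ the rigid stabilizer $\mathrm{Rist}_G(U)$ (elements fixing $X\setminus U$ pointwise) is non-trivial. A continuous surjective $G$-equivariant map $\pi:Y\to Z$ between compact $G$-spaces is a highly proximal extension if for every non-empty open $U\subseteq Y$ there exists $z\in Z$ with $\pi^{-1}(z)\subseteq U$; $Y$ is then a highly proximal extension of $Z$. *)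

(* Defs.v *)
From HB Require Import structures.
From mathcomp Require Import all_boot all_order all_algebra.
From mathcomp Require Import all_classical all_reals all_analysis.
Set Implicit Arguments. Unset Strict Implicit. Unset Printing Implicit Defensive.
Local Open Scope classical_set_scope.

(* The spherically homogeneous rooted tree T_m with branching sequence m:     *)
(* vertices of level n are the words v = [:: v_0; ...; v_(n-1)] with          *)
(* v_i < m i; the root is [::]; the parent of a non-root v is belast-word      *)
(* take (size v).-1 v.  (Every infinite spherically homogeneous locally        *)
(* finite rooted tree is isomorphic to some T_m with m i > 0 for all i.)      *)

Definition vertex (m : nat -> nat) (v : seq nat) : Prop :=
  forall i, (i < size v)%N -> (nth 0%N v i < m i)%N.

Definition parent (v : seq nat) : seq nat := take (size v).-1 v.

(* Root-fixing automorphisms of T_m, represented as maps on words that are  *)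
(* the identity off the vertex set (so that equality of automorphisms is     *)
(* plain equality of functions): a bijection of the vertex set fixing the    *)
(* root and commuting with the parent map (i.e. preserving the edges).       *)
Definition is_aut (m : nat -> nat) (g : seq nat -> seq nat) : Prop :=
  [/\ (forall v, ~ vertex m v -> g v = v),
      (forall v, vertex m v -> vertex m (g v)),
      (forall v, vertex m v -> exists2 w, vertex m w & g w = v),
      (forall v w, vertex m v -> vertex m w -> g v = g w -> v = w) &
      g [::] = [::] /\
      (forall v, vertex m v -> v <> [::] -> g (parent v) = parent (g v))].

Definition aut_subgroup (m : nat -> nat) (G : set (seq nat -> seq nat)) : Prop :=
  [/\ G `<=` is_aut m, G id,
      (forall g h, G g -> G h -> G (g \o h)) &
      (forall g, G g -> exists2 h, G h & h \o g = id /\ g \o h = id)].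

Definition below (v w : seq nat) : Prop := take (size v) w = v.

Definition rist_vertex (m : nat -> nat) (G : set (seq nat -> seq nat))
    (v : seq nat) : set (seq nat -> seq nat) :=
  [set g | G g /\ forall w, vertex m w -> ~ below v w -> g w = w].

(* Weakly branch groups (T = T_m infinite: m i > 0 for all i). *)
Definition weakly_branch (m : nat -> nat) (G : set (seq nat -> seq nat)) : Prop :=
  [/\ aut_subgroup m G,
      (forall i, (0 < m i)%N),
      (forall u v, vertex m u -> vertex m v -> size u = size v ->
          exists2 g, G g & g u = v) &
      (forall v, vertex m v -> exists2 g, rist_vertex m G v g & g <> id)].

(* The boundary dT_m: the rays, i.e. sequences xi with xi i < m i, as a      *)
(* subspace of the product {ptws nat -> nat} (nat discrete).                 *)
Definition boundary (m : nat -> nat) : set {ptws nat -> nat} :=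
  [set xi | forall i, (xi i < m i)%N].

Definition bact (g : seq nat -> seq nat) (xi : {ptws nat -> nat})
  : {ptws nat -> nat} := fun n => nth 0%N (g (mkseq xi n.+1)) n.

Definition is_Gspace (G : set (seq nat -> seq nat)) (X : topologicalType)
    (act : (seq nat -> seq nat) -> X -> X) : Prop :=
  [/\ hausdorff_space X, compact [set: X],
      (forall g, G g -> continuous (act g)),
      act id = id &
      (forall g h, G g -> G h -> act (g \o h) = act g \o act h)].

Definition faithful_action (G : set (seq nat -> seq nat)) (X : Type)
    (act : (seq nat -> seq nat) -> X -> X) : Prop :=
  forall g, G g -> act g = id -> g = id.

Definition minimal_action (G : set (seq nat -> seq nat)) (X : topologicalType)
    (act : (seq nat -> seq nat) -> X -> X) : Prop :=
  [set: X] !=set0 /\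
  forall C : set X, closed C -> (forall g x, G g -> C x -> C (act g x)) ->
    C = set0 \/ C = setT.

Definition rist (G : set (seq nat -> seq nat)) (X : Type)
    (act : (seq nat -> seq nat) -> X -> X) (U : set X)
  : set (seq nat -> seq nat) :=
  [set g | G g /\ forall x, ~ U x -> act g x = x].

Definition micro_supported (G : set (seq nat -> seq nat)) (X : topologicalType)
    (act : (seq nat -> seq nat) -> X -> X) : Prop :=
  forall U : set X, open U -> U !=set0 -> exists2 g, rist G act U g & g <> id.

Definition highly_proximal_ext (m : nat -> nat) (G : set (seq nat -> seq nat))
    (X : topologicalType) (act : (seq nat -> seq nat) -> X -> X)
    (pi : X -> {ptws nat -> nat}) : Prop :=
  [/\ continuous pi,
      (forall x, boundary m (pi x)),
      (forall z, boundary m z -> exists x, pi x = z),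
      (forall g x, G g -> pi (act g x) = bact g (pi x)) &
      (forall U : set X, open U -> U !=set0 ->
         exists2 z, boundary m z & pi @^-1` [set z] `<=` U)].

(* Main.v *)
Require Import Defs.
From HB Require Import structures.
From mathcomp Require Import all_boot all_order all_algebra.
From mathcomp Require Import all_classical all_reals all_analysis.
Local Open Scope classical_set_scope.
Set Implicit Arguments. Unset Strict Implicit.


Lemma vertex_take m v j : vertex m v -> vertex m (take j v).
Proof.
move=> hv i; rewrite size_take_min leq_min => /andP[hj hi].
by rewrite nth_take //; apply: hv.
Qed.

Lemma vertex_nil m : vertex m [::].
Proof. by move=> i. Qed.

Lemma size_aut m g u : is_aut m g -> vertex m u -> size (g u) = size u.
Proof.
move=> [h1 h2 h3 h4 [h5 h6]].
move: {2}(size u) (erefl (size u)) => n; elim: n u => [|n IH] u hs hu.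
  by move/size0nil: hs => ->; rewrite h5.
have un : u <> [::] by move=> e; rewrite e in hs.
have hp := h6 u hu un.
have vp : vertex m (parent u) by apply: vertex_take.
have sp : size (parent u) = n by rewrite /parent size_takel hs.
have := IH _ sp vp; rewrite hp /parent size_take_min => e.
have gu0 : g u <> [::].
  by move=> e'; apply: un; apply: (h4 _ _ hu (vertex_nil m)); rewrite e' h5.
case E: (size (g u)) => [|k]; first by move/size0nil: E => /gu0.
by move: e; rewrite E hs /= (minn_idPl (leqnSn k)) size_takel ?hs // => ->.
Qed.

Lemma take_aut m g u j : is_aut m g -> vertex m u -> g (take j u) = take j (g u).
Proof.
move=> ha; have [h1 h2 h3 h4 [h5 h6]] := ha.
move: {2}(size u) (erefl (size u)) => n; elim: n u j => [|n IH] u j hs hu.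
  by move/size0nil: hs => ->; rewrite h5 take_oversize.
case: (leqP (n.+1) j) => hj.
  rewrite !take_oversize //; first by rewrite (size_aut ha hu) hs.
  by rewrite hs.
have un : u <> [::] by move=> e; rewrite e in hs.
have vp : vertex m (parent u) by apply: vertex_take.
have sp : size (parent u) = n by rewrite /parent size_takel hs.
have -> : take j u = take j (parent u) by rewrite /parent take_takel // hs.
rewrite (IH _ j sp vp) (h6 u hu un) /parent (size_aut ha hu) hs /= take_takel //.
Qed.

Definition fixout m (v : seq nat) (a : seq nat -> seq nat) :=
  forall w, vertex m w -> ~ below v w -> a w = w.

Lemma below_refl v : below v v.
Proof. by rewrite /below take_size. Qed.

Lemma fixout_fixv m v a : is_aut m a -> fixout m v a -> vertex m v -> a v = v.
Proof.
move=> ha hf hv; have [h1 h2 h3 h4 [h5 h6]] := ha.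
case: (eqVneq (a v) v) => // ne.
have hu : vertex m (a v) by apply: h2.
have su : size (a v) = size v by exact: size_aut ha hv.
have nb : ~ below v (a v) by rewrite /below -su take_size; apply/eqP.
have := hf _ hu nb => e.
by have := h4 _ _ hu hv e => e'; rewrite e' eqxx in ne.
Qed.

Lemma fixout_below m v a u : is_aut m a -> fixout m v a -> vertex m u -> below v u ->
  below v (a u).
Proof.
move=> ha hf hu hb.
have hv : vertex m v by rewrite -hb; apply: vertex_take.
by rewrite /below -(take_aut _ ha hu) hb (fixout_fixv ha hf hv).
Qed.

Lemma fixout_comm m v w a b : is_aut m a -> is_aut m b -> fixout m v a -> fixout m w b ->
  size v = size w -> v <> w -> a \o b = b \o a.
Proof.
move=> ha hb fa fb svw nvw; apply: funext => u /=.
have [a1 a2 _ _ _] := ha; have [b1 b2 _ _ _] := hb.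
case: (pselect (vertex m u)) => hu; last by rewrite (a1 _ hu) (b1 _ hu) (a1 _ hu).
case: (pselect (below v u)) => bv.
  have nbw : ~ below w u by rewrite /below -svw bv => e; apply: nvw.
  rewrite (fb _ hu nbw).
  have := fixout_below ha fa hu bv => bv'.
  have nbw' : ~ below w (a u) by rewrite /below -svw bv' => e; apply: nvw.
  by rewrite (fb _ (a2 _ hu) nbw').
case: (pselect (below w u)) => bw.
  rewrite (fa _ hu bv).
  have := fixout_below hb fb hu bw => bw'.
  have nbv' : ~ below v (b u) by rewrite /below svw bw' => e; apply: nvw.
  by rewrite (fa _ (b2 _ hu) nbv').
by rewrite (fa _ hu bv) (fb _ hu bw) (fa _ hu bv).
Qed.

Lemma fixout_conj m v g g' a : is_aut m g -> is_aut m g' -> g \o g' = id ->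
  fixout m v a -> vertex m v -> fixout m (g v) (g \o a \o g').
Proof.
move=> hg hg' e fa hv w hw nb /=.
have [_ b2 _ _ _] := hg'.
have nb' : ~ below v (g' w).
  move=> hb; apply: nb; rewrite /below (size_aut hg hv).
  have := take_aut (size v) hg (b2 _ hw); rewrite hb => ->.
  by have := congr1 (fun f => f w) e => /= ->.
rewrite (fa _ (b2 _ hw) nb').
by have := congr1 (fun f => f w) e.
Qed.

Lemma fixout_take m v a j : fixout m v a -> fixout m (take j v) a.
Proof.
move=> fa w hw nb; apply: fa => // hb; apply: nb.
by rewrite /below -{2}hb -take_min size_take_min.
Qed.

Lemma fixout_comp m v a b : fixout m v a -> fixout m v b -> is_aut m b -> fixout m v (a \o b).
Proof. by move=> fa fb hb w hw nb /=; rewrite (fb _ hw nb) (fa _ hw nb). Qed.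

Lemma fixout_inv m v a a' : fixout m v a -> a' \o a = id -> fixout m v a'.
Proof.
move=> fa e w hw nb; have := congr1 (fun f => f w) e => /=.
by rewrite (fa _ hw nb).
Qed.

Fixpoint words (m : nat -> nat) n : seq (seq nat) :=
  match n with
  | 0 => [:: [::]]
  | n'.+1 => [seq rcons u i | u <- words m n', i <- iota 0 (m n')]
  end.

Lemma words_ok m u : vertex m u -> u \in words m (size u).
Proof.
elim/last_ind: u => [|u x IH] hu; first by rewrite inE.
rewrite size_rcons /=.
have hu' : vertex m u by have := vertex_take (j:=size u) hu; rewrite -cats1 takel_cat // take_size.
apply: allpairs_f; first exact: IH.
rewrite mem_iota /= add0n.
by have := hu (size u); rewrite size_rcons nth_rcons ltnn eqxx ltnSn => /(_ isT).
Qed.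

Lemma boundary_vertex m (z : {ptws nat -> nat}) n : boundary m z -> vertex m (mkseq z n).
Proof. by move=> hz i; rewrite size_mkseq => hi; rewrite nth_mkseq. Qed.

Lemma mkseq_bact m g (z : {ptws nat -> nat}) n : is_aut m g -> boundary m z ->
  mkseq (bact g z) n = g (mkseq z n).
Proof.
move=> hg hz; have hv := boundary_vertex (n:=n) hz.
apply: (@eq_from_nth _ 0); first by rewrite size_mkseq (size_aut hg hv) size_mkseq.
move=> i; rewrite size_mkseq => hi; rewrite nth_mkseq // /bact.
have -> : mkseq z i.+1 = take i.+1 (mkseq z n).
  apply: (@eq_from_nth _ 0); first by rewrite size_mkseq size_takel // size_mkseq.
  by move=> j; rewrite size_mkseq => hj; rewrite nth_take // !nth_mkseq // (leq_trans hj hi).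
by rewrite (take_aut _ hg hv) nth_take.
Qed.

Definition ext (u : seq nat) : {ptws nat -> nat} := fun i => nth 0%N u i.

Lemma ext_boundary m u : (forall i, (0 < m i)%N) -> vertex m u -> boundary m (ext u).
Proof.
move=> hm hu i; rewrite /ext; case: (ltnP i (size u)) => hi; first exact: hu.
by rewrite nth_default.
Qed.

Lemma mkseq_ext u : mkseq (ext u) (size u) = u.
Proof. exact: mkseq_nth. Qed.

Lemma boundary_bact m g (z : {ptws nat -> nat}) : is_aut m g -> boundary m z ->
  boundary m (bact g z).
Proof.
move=> hg hz n; 
have e := mkseq_bact n.+1 hg hz.
have hv : vertex m (g (mkseq z n.+1)) by case: hg => _ h2 _ _ _; apply: h2; exact: boundary_vertex.
have := hv n; rewrite -e size_mkseq nth_mkseq // => /(_ (ltnSn n)) //.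
Qed.


Lemma open_local (X : topologicalType) (A : set X) :
  (forall x, A x -> exists U0, [/\ open U0, U0 x & U0 `<=` A]) -> open A.
Proof.
move=> h; rewrite openE => x Ax; have [U0 [oO Ox sOA]] := h x Ax.
by apply: (filterS sOA); apply: open_nbhs_nbhs; split.
Qed.

Lemma sep (X : topologicalType) (f h : X -> X) x : hausdorff_space X ->
  continuous f -> continuous h -> f x <> h x ->
  exists U0, [/\ open U0, U0 x & forall y y', U0 y -> U0 y' -> f y <> h y'].
Proof.
move=> hX cf ch ne; rewrite open_hausdorff in hX.
have ne' : f x != h x by apply/eqP.
have [[P Q] [Pf Qh] [oP oQ PQ]] := hX _ _ ne'; simpl in *.
exists (f @^-1` P `&` h @^-1` Q); split.
- by apply: openI; apply: open_comp => // y _.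
- by split; apply/set_mem.
- move=> y y' [Py _] [_ Qy'] e.
  have : (P `&` Q) (f y) by split => //; rewrite e.
  by rewrite (eqP PQ).
Qed.

Lemma cont_id (X : topologicalType) : continuous (@id X).
Proof. by move=> x; exact: cvg_id. Qed.

Lemma actC (G : set (seq nat -> seq nat)) (X : topologicalType) (act : (seq nat -> seq nat) -> X -> X) g h x :
  is_Gspace G act -> G g -> G h -> act (g \o h) x = act g (act h x).
Proof. by case=> _ _ _ _ hc Gg Gh; rewrite hc. Qed.

Lemma act_inv (G : set (seq nat -> seq nat)) (X : topologicalType) (act : (seq nat -> seq nat) -> X -> X) g g' x :
  is_Gspace G act -> G g -> G g' -> g' \o g = id -> act g' (act g x) = x.
Proof.
move=> HX Gg Gg' e; rewrite -(actC _ HX Gg' Gg) e.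
by case: HX => _ _ _ -> _.
Qed.

Lemma inv_ex m G g : aut_subgroup m G -> G g ->
  exists g', [/\ G g', g' \o g = id & g \o g' = id].
Proof. by case=> _ _ _ hi Gg; have [h Gh [e1 e2]] := hi g Gg; exists h. Qed.

Lemma act_inj (G : set (seq nat -> seq nat)) (X : topologicalType) (act : (seq nat -> seq nat) -> X -> X) m g x y :
  aut_subgroup m G -> is_Gspace G act -> G g -> act g x = act g y -> x = y.
Proof.
move=> HG HX Gg e; have [g' [Gg' e1 e2]] := inv_ex HG Gg.
by rewrite -(act_inv x HX Gg Gg' e1) -(act_inv y HX Gg Gg' e1) e.
Qed.

Lemma rist_maps (G : set (seq nat -> seq nat)) (X : topologicalType) (act : (seq nat -> seq nat) -> X -> X) m k (W : set X) y :
  aut_subgroup m G -> is_Gspace G act -> G k -> (forall y, ~ W y -> act k y = y) ->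
  W y -> W (act k y).
Proof.
move=> HG HX Gk hk Wy; apply: contrapT => nW.
have := hk _ nW => /(act_inj HG HX Gk) e.
by apply: nW; rewrite e.
Qed.

Lemma fix_inv (G : set (seq nat -> seq nat)) (X : topologicalType) (act : (seq nat -> seq nat) -> X -> X) k k' (W : set X) :
  is_Gspace G act -> G k -> G k' -> k' \o k = id -> (forall y, ~ W y -> act k y = y) ->
  forall y, ~ W y -> act k' y = y.
Proof.
move=> HX Gk Gk' e hk y nW.
by rewrite -{1}(hk y nW) (act_inv y HX Gk Gk' e).
Qed.

Lemma moves (G : set (seq nat -> seq nat)) (X : topologicalType) (act : (seq nat -> seq nat) -> X -> X) g :
  faithful_action G act -> G g -> g <> id -> exists x, act g x <> x.
Proof.
move=> hf Gg ne; apply: contrapT => hn; apply: ne; apply: hf => //.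
apply: funext => x; apply: contrapT => h; apply: hn; by exists x.
Qed.

Lemma act_cont (G : set (seq nat -> seq nat)) (X : topologicalType) (act : (seq nat -> seq nat) -> X -> X) g :
  is_Gspace G act -> G g -> continuous (act g).
Proof. by case=> _ _ hc _ _; exact: hc. Qed.

Lemma Gcomp m G g h : aut_subgroup m G -> G g -> G h -> G (g \o h).
Proof. by case=> _ _ hc _; exact: hc. Qed.

Lemma Gaut m G g : aut_subgroup m G -> G g -> is_aut m g.
Proof. by case=> hs _ _ _; exact: hs. Qed.


Lemma loc (G : set (seq nat -> seq nat)) (X : topologicalType) (act : (seq nat -> seq nat) -> X -> X) m k k' a a' (W : set X) :
  aut_subgroup m G -> is_Gspace G act -> G k -> G k' -> G a -> G a' ->
  k' \o k = id -> a \o a' = id ->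
  (forall y, ~ W y -> act k y = y) ->
  (forall y y', W y -> W y' -> act a y <> y') ->
  (forall y, W y -> act (k \o a \o k' \o a') y = act k y) /\
  (forall y, ~ W y -> (forall y0, W y0 -> act a y0 <> y) -> act (k \o a \o k' \o a') y = y).
Proof.
move=> HG HX Gk Gk' Ga Ga' ek ea hk hW.
have hk' := fix_inv HX Gk Gk' ek hk.
have aa y : act a (act a' y) = y by apply: (act_inv y HX Ga' Ga ea).
have E y : act (k \o a \o k' \o a') y = act k (act a (act k' (act a' y))).
  have G1 : G (k \o a) := Gcomp HG Gk Ga.
  have G2 : G (k \o a \o k') := Gcomp HG G1 Gk'.
  by rewrite (actC _ HX G2 Ga') (actC _ HX G1 Gk') (actC _ HX Gk Ga).
split=> y Wy.
  rewrite E; have nW : ~ W (act a' y) by move=> W'; apply: (hW _ _ W' Wy); rewrite aa.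
  by rewrite (hk' _ nW) aa.
move=> h; rewrite E; have nW : ~ W (act a' y) by move=> W'; apply: (h _ W'); rewrite aa.
by rewrite (hk' _ nW) aa (hk _ Wy).
Qed.


Lemma pigeon (f : nat -> seq nat) (l : seq (seq nat)) K : (size l < K)%N ->
  (forall i, (i < K)%N -> f i \in l) -> exists i j, (i < j < K)%N /\ f i = f j.
Proof.
move=> hK hl; apply: contrapT => hn.
have inj : {in iota 0 K &, injective f}.
  move=> i j; rewrite !mem_iota /= !add0n => hi hj e.
  case: (ltngtP i j) => // h; exfalso; apply: hn.
    by exists i, j; rewrite h hj.
  by exists j, i; rewrite h hi.
have u : uniq (map f (iota 0 K)) by rewrite map_inj_in_uniq // iota_uniq.
have sub : {subset map f (iota 0 K) <= l}.
  by move=> y /mapP [i]; rewrite mem_iota /= add0n => hi ->; exact: hl.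
by have := uniq_leq_size u sub; rewrite size_map size_iota leqNgt hK.
Qed.

Lemma split_open m G (X : topologicalType) (act : (seq nat -> seq nat) -> X -> X) (R : set X) :
  aut_subgroup m G -> is_Gspace G act -> faithful_action G act -> micro_supported G act ->
  open R -> R !=set0 ->
  exists R1 R2, [/\ open R1, open R2, R1 !=set0 & R2 !=set0] /\
    [/\ (R1 `<=` R), (R2 `<=` R) & (forall y, R1 y -> R2 y -> False)].
Proof.
move=> HG HX Hf Hm oR nR.
have [k [Gk hk] nk] := Hm R oR nR.
have [y hy] := moves Hf Gk nk.
have Ry : R y by apply: contrapT => nRy; apply: hy; apply: hk.
have hH : hausdorff_space X by case: HX.
have [U0 [oU Uy hU]] := sep hH (act_cont HX Gk) (@cont_id X) hy.
have [k' [Gk' e1 e2]] := inv_ex HG Gk.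
exists (U0 `&` R), (act k' @^-1` (U0 `&` R)); split; [split|split].
- exact: openI.
- apply: open_comp; last exact: openI.
  by move=> z _; apply: (act_cont HX Gk').
- by exists y.
- by exists (act k y); rewrite /= (act_inv y HX Gk Gk' e1).
- by move=> z [].
- move=> z [_ Rz]; have := rist_maps HG HX Gk hk Rz.
  by rewrite (act_inv z HX Gk' Gk e2).
- move=> z [Uz _] [Uz' _]; apply: (hU _ _ Uz' Uz).
  by rewrite (act_inv z HX Gk' Gk e2).
Qed.

Lemma fixv m G (X : topologicalType) (act : (seq nat -> seq nat) -> X -> X) (W : set X) v :
  aut_subgroup m G -> is_Gspace G act -> faithful_action G act -> micro_supported G act ->
  open W -> W !=set0 -> vertex m v ->
  exists k, [/\ G k, (forall y, ~ W y -> act k y = y), k <> id & k v = v].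
Proof.
move=> HG HX Hf Hm oW nW hv.
have claim : forall K, exists (ks : nat -> seq nat -> seq nat) (R : set X),
  [/\ open R, R !=set0, R `<=` W,
     (forall i, (i < K)%N -> [/\ G (ks i), (forall y, ~ W y -> act (ks i) y = y) &
                                 (forall y, R y -> act (ks i) y = y)]) &
     (forall i j, (j < i < K)%N -> act (ks i) <> act (ks j))].
  elim=> [|K [ks [R [oR nR sRW hks hd]]]].
    by exists (fun _ => id), W; split => // i j /andP [_]; rewrite ltn0.
  have [R1 [R2 [[oR1 oR2 nR1 nR2] [s1 s2 d12]]]] := split_open HG HX Hf Hm oR nR.
  have [k [Gk hk] nk] := Hm R1 oR1 nR1.
  exists (fun i => if i == K then k else ks i), R2; split => //.
  - by move=> y /s2 /sRW.
  - move=> i hi; case: eqP => [_|ne].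
      split => //.
        by move=> y hy; apply: hk => h1; apply: hy; apply: sRW; apply: s1.
      by move=> y hy; apply: hk => h1; apply: (d12 _ h1 hy).
    have hiK : (i < K)%N by move: hi; rewrite ltnS leq_eqVlt => /orP [/eqP//|].
    have [a b c] := hks i hiK; split => // y /s2; exact: c.
  - move=> i j /andP [hji hiK]; case: eqP => [ei|ne].
      have hjK : (j < K)%N by rewrite -ei.
      rewrite (ltn_eqF hjK).
      have [y hy] := moves Hf Gk nk.
      have R1y : R1 y by apply: contrapT => nR1y; apply: hy; apply: hk.
      have [_ _ c] := hks j hjK.
      by move=> e; apply: hy; rewrite e; apply: c; apply: s1.
    have hiK' : (i < K)%N by move: hiK; rewrite ltnS leq_eqVlt => /orP [/eqP//|].
    rewrite (ltn_eqF (ltn_trans hji hiK')).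
    by apply: hd; rewrite hji.
have [ks [R [_ _ _ hks hd]]] := claim (size (words m (size v))).+1.
have [i [j [/andP [hij hjK] e]]] : exists i j, (i < j < (size (words m (size v))).+1)%N /\ ks i v = ks j v.
  apply: pigeon => // i hi; have [Gi _ _] := hks i hi.
  have ai := Gaut HG Gi.
  have hvi : vertex m (ks i v) by case: ai => _ h2 _ _ _; apply: h2.
  by have := words_ok hvi; rewrite (size_aut ai hv).
have [Gi _ _] := hks i (ltn_trans hij hjK).
have [Gj _ _] := hks j hjK.
have [_ hoi _] := hks i (ltn_trans hij hjK).
have [kj' [Gj' e1 e2]] := inv_ex HG Gj.
exists (kj' \o ks i); split.
- exact: Gcomp HG Gj' Gi.
- move=> y nWy; rewrite (actC _ HX Gj' Gi) (hoi _ nWy).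
  have [_ hoj _] := hks j hjK.
  exact: (fix_inv HX Gj Gj' e1 hoj).
- move=> ec; apply: (hd j i); first by rewrite hij hjK.
  have -> : ks i = ks j by rewrite -[ks i]/(id \o ks i) -e2 -[RHS]/(ks j \o id) -ec.
  by [].
- by rewrite /= e; have := congr1 (fun f => f v) e1.
Qed.


Lemma disj m G (X : topologicalType) (act : (seq nat -> seq nat) -> X -> X) v w a b x :
  aut_subgroup m G -> is_Gspace G act -> faithful_action G act -> micro_supported G act ->
  vertex m v -> vertex m w -> size v = size w -> v <> w ->
  rist_vertex m G v a -> rist_vertex m G w b -> act a x <> x -> act b x <> x -> False.
Proof.
move=> HG HX Hf Hm hv hw svw nvw [Ga fa] [Gb fb] hax hbx.
have hH : hausdorff_space X by case: HX.
have [a' [Ga' ea1 ea2]] := inv_ex HG Ga.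
have ca := act_cont HX Ga; have cb := act_cont HX Gb.
have [Q1 [op1 x1 h1]] := sep hH ca (@cont_id X) hax.
have [Q2 [op2 x2 h2]] := sep hH cb (@cont_id X) hbx.
pose W := Q1 `&` Q2.
have oW : open W by apply: openI.
have nW : W !=set0 by exists x.
have [k [Gk hk nk kv]] := fixv HG HX Hf Hm oW nW hv.
have [k' [Gk' ek1 ek2]] := inv_ex HG Gk.
pose c := k \o a \o k' \o a'.
have Gc : G c := Gcomp HG (Gcomp HG (Gcomp HG Gk Ga) Gk') Ga'.
have fc : fixout m v c.
  have ak := Gaut HG Gk; have ak' := Gaut HG Gk'; have aa' := Gaut HG Ga'.
  have := fixout_conj ak ak' ek2 fa hv; rewrite kv => f1.
  apply: fixout_comp => //; exact: fixout_inv fa ea1.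
have hW : forall y y', W y -> W y' -> act a y <> y'.
  by move=> y y' [? _] [? _]; apply: h1.
have [lc1 _] := loc HG HX Gk Gk' Ga Ga' ek1 ea2 hk hW.
have [x' hx'] := moves Hf Gk nk.
have Wx' : W x' by apply: contrapT => nw; apply: hx'; apply: hk.
have cx' : act c x' = act k x' := lc1 _ Wx'.
have Wkx : W (act k x') := rist_maps HG HX Gk hk Wx'.
have n1 : act c x' <> x' by rewrite cx'.
have n2 : act b x' <> x' by apply: h2; case: Wx'.
have n3 : act b x' <> act c x' by rewrite cx'; apply: h2; [case: Wx'|case: Wkx].
have cc := act_cont HX Gc.
have [Q3 [op3 x3 h3]] := sep hH cc (@cont_id X) n1.
have [Q4 [op4 x4 h4]] := sep hH cb (@cont_id X) n2.
have [Q5 [op5 x5 h5]] := sep hH cb cc n3.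
pose W2 := Q3 `&` (Q4 `&` Q5).
have oW2 : open W2 by apply: openI => //; apply: openI.
have nW2 : W2 !=set0 by exists x'.
have [k2 [Gk2 hk2 nk2 k2v]] := fixv HG HX Hf Hm oW2 nW2 hv.
have [k2' [Gk2' ek21 ek22]] := inv_ex HG Gk2.
have [c' [Gc' ec1 ec2]] := inv_ex HG Gc.
pose e := k2 \o c \o k2' \o c'.
have Ge : G e := Gcomp HG (Gcomp HG (Gcomp HG Gk2 Gc) Gk2') Gc'.
have fe : fixout m v e.
  have ak := Gaut HG Gk2; have ak' := Gaut HG Gk2'; have aa' := Gaut HG Gc'.
  have := fixout_conj ak ak' ek22 fc hv; rewrite k2v => f1.
  apply: fixout_comp => //; exact: fixout_inv fc ec1.
have hW2 : forall y y', W2 y -> W2 y' -> act c y <> y'.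
  by move=> y y' [? _] [? _]; apply: h3.
have [le1 le2] := loc HG HX Gk2 Gk2' Gc Gc' ek21 ec2 hk2 hW2.
have comm : e \o b = b \o e := fixout_comm (Gaut HG Ge) (Gaut HG Gb) fe fb svw nvw.
have [y hy] := moves Hf Gk2 nk2.
have W2y : W2 y by apply: contrapT => nw; apply: hy; apply: hk2.
have nb : ~ W2 (act b y).
  by move=> [_ [hh _]]; apply: (h4 y (act b y)) => //; case: W2y => _ [].
have nb' : forall y0, W2 y0 -> act c y0 <> act b y.
  move=> y0 [_ [_ hh]] ee; case: W2y => _ [_ hy5].
  exact: (h5 y y0 hy5 hh (esym ee)).
have := congr1 (fun f => act f y) comm => /=.
rewrite (actC _ HX Ge Gb) (actC _ HX Gb Ge) (le2 _ nb nb') (le1 _ W2y) => ee.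
by apply: hy; apply: (act_inj HG HX Gb); rewrite ee.
Qed.


Record H4 m G (X : topologicalType) (act : (seq nat -> seq nat) -> X -> X) := {
  hwb : weakly_branch m G; hgs : is_Gspace G act; hmin : minimal_action G act;
  hfa : faithful_action G act; hms : micro_supported G act }.

Definition SV m G (X : topologicalType) (act : (seq nat -> seq nat) -> X -> X) v : set X :=
  [set x | exists a, rist_vertex m G v a /\ act a x <> x].


Lemma H4G m G (X : topologicalType) (act : (seq nat -> seq nat) -> X -> X) : @H4 m G X act -> aut_subgroup m G.
Proof. by case=> [[]]. Qed.

Lemma SV_open m G (X : topologicalType) (act : (seq nat -> seq nat) -> X -> X) v : @H4 m G X act -> open (SV m G act v).
Proof.
move=> H; apply: open_local => x [a [[Ga fa] hax]].
have hH : hausdorff_space X by case: (hgs H).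
have [U0 [oU Ux hU]] := sep hH (act_cont (hgs H) Ga) (@cont_id X) hax.
exists U0; split => // y Uy; exists a; split => //; exact: hU.
Qed.

Lemma SV_conj m G (X : topologicalType) (act : (seq nat -> seq nat) -> X -> X) v g x : @H4 m G X act -> G g -> vertex m v ->
  SV m G act v x -> SV m G act (g v) (act g x).
Proof.
move=> H Gg hv [a [[Ga fa] hax]]; have HG := H4G H; have HX := hgs H.
have [g' [Gg' e1 e2]] := inv_ex HG Gg.
exists (g \o a \o g'); split; first split.
- exact: Gcomp HG (Gcomp HG Gg Ga) Gg'.
- exact: fixout_conj (Gaut HG Gg) (Gaut HG Gg') e2 fa hv.
rewrite (actC _ HX (Gcomp HG Gg Ga) Gg') (actC _ HX Gg Ga) (act_inv x HX Gg Gg' e1).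
by move/(act_inj HG HX Gg).
Qed.

Lemma SV_take m G (X : topologicalType) (act : (seq nat -> seq nat) -> X -> X) v j x : SV m G act v x -> SV m G act (take j v) x.
Proof. by move=> [a [[Ga fa] hax]]; exists a; split => //; split => //; exact: fixout_take. Qed.

Lemma nseq_vertex m n : (forall i, (0 < m i)%N) -> vertex m (nseq n 0%N).
Proof. by move=> hm i; rewrite size_nseq => hi; rewrite nth_nseq hi. Qed.

Lemma SV_cover m G (X : topologicalType) (act : (seq nat -> seq nat) -> X -> X) x n : @H4 m G X act ->
  exists v, [/\ vertex m v, size v = n & SV m G act v x].
Proof.
move=> H; apply: contrapT => hn.
have HG := H4G H; have HX := hgs H.
pose D := [set y | exists v, [/\ vertex m v, size v = n & SV m G act v y]].
have oD : open D.
  apply: open_local => y [v [hv sv Sy]]; exists (SV m G act v); split => //.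
    exact: SV_open.
  by move=> z Sz; exists v.
have cC : closed (~` D) by apply: open_closedC.
have inv : forall g y, G g -> (~` D) y -> (~` D) (act g y).
  move=> g y Gg nD [u [hu su Su]]; apply: nD.
  have [g' [Gg' e1 e2]] := inv_ex HG Gg.
  exists (g' u); split.
  - by case: (Gaut HG Gg') => _ h2 _ _ _; apply: h2.
  - by rewrite (size_aut (Gaut HG Gg') hu).
  - by have := SV_conj H Gg' hu Su; rewrite (act_inv y HX Gg Gg' e1).
have [_ hmin] := hmin H.
case: (hmin _ cC inv) => hC.
  by have : (~` D) x by []; rewrite hC.
have [_ hm _ hr] := hwb H.
have hv0 := nseq_vertex (n:=n) hm.
have [a ra na] := hr _ hv0.
have [y hy] := moves (hfa H) ra.1 na.
have : (~` D) y by rewrite hC.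
by apply; exists (nseq n 0%N); split => //; [rewrite size_nseq | exists a].
Qed.

Lemma SV_uniq m G (X : topologicalType) (act : (seq nat -> seq nat) -> X -> X) x u u' : @H4 m G X act -> vertex m u -> vertex m u' ->
  size u = size u' -> SV m G act u x -> SV m G act u' x -> u = u'.
Proof.
move=> H hu hu' s [a [ra ha]] [b [rb hb]]; apply: contrapT => ne.
exact: disj (H4G H) (hgs H) (hfa H) (hms H) hu hu' s ne ra rb ha hb.
Qed.

Definition Vx m G (X : topologicalType) (act : (seq nat -> seq nat) -> X -> X) x n :=
  xget [::] [set u | [/\ vertex m u, size u = n & SV m G act u x]].

Lemma Vx_spec m G (X : topologicalType) (act : (seq nat -> seq nat) -> X -> X) x n : @H4 m G X act ->
  [/\ vertex m (Vx m G act x n), size (Vx m G act x n) = n & SV m G act (Vx m G act x n) x].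
Proof.
move=> H; rewrite /Vx; case: xgetP => //.
by move=> hn; have [v hv] := SV_cover x n H; have := hn v.
Qed.

Lemma Vx_uniq m G (X : topologicalType) (act : (seq nat -> seq nat) -> X -> X) x u : @H4 m G X act -> vertex m u -> SV m G act u x ->
  Vx m G act x (size u) = u.
Proof.
move=> H hu Su; have [h1 h2 h3] := Vx_spec x (size u) H.
exact: SV_uniq H h1 hu h2 h3 Su.
Qed.

Lemma Vx_take m G (X : topologicalType) (act : (seq nat -> seq nat) -> X -> X) x j n : @H4 m G X act -> (j <= n)%N ->
  Vx m G act x j = take j (Vx m G act x n).
Proof.
move=> H hj; have [h1 h2 h3] := Vx_spec x n H.
have := Vx_uniq H (vertex_take (j:=j) h1) (SV_take j h3).
by rewrite size_takel ?h2.
Qed.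

Definition piX m G (X : topologicalType) (act : (seq nat -> seq nat) -> X -> X) x
  : {ptws nat -> nat} := fun n => nth 0%N (Vx m G act x n.+1) n.

Lemma mkseq_pi m G (X : topologicalType) (act : (seq nat -> seq nat) -> X -> X) x n : @H4 m G X act -> mkseq (piX m G act x) n = Vx m G act x n.
Proof.
move=> H; have [_ h2 _] := Vx_spec x n H.
apply: (@eq_from_nth _ 0%N); first by rewrite size_mkseq h2.
move=> i; rewrite size_mkseq => hi; rewrite nth_mkseq // /piX.
by rewrite (Vx_take x H hi) nth_take.
Qed.

Lemma Vx_act m G (X : topologicalType) (act : (seq nat -> seq nat) -> X -> X) x g n : @H4 m G X act -> G g ->
  Vx m G act (act g x) n = g (Vx m G act x n).
Proof.
move=> H Gg; have [h1 h2 h3] := Vx_spec x n H.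
have ag := Gaut (H4G H) Gg.
have hv : vertex m (g (Vx m G act x n)) by case: ag => _ h _ _ _; apply: h.
have := Vx_uniq H hv (SV_conj H Gg h1 h3).
by rewrite (size_aut ag h1) h2.
Qed.


Lemma Vx_loc m G (X : topologicalType) (act : (seq nat -> seq nat) -> X -> X) x n :
  @H4 m G X act -> nbhs x (fun y => Vx m G act y n = Vx m G act x n).
Proof.
move=> H; have [h1 h2 h3] := Vx_spec x n H.
apply: (@filterS _ _ _ (SV m G act (Vx m G act x n))).
  by move=> y Sy; rewrite -{1}h2; exact: Vx_uniq H h1 Sy.
by apply: open_nbhs_nbhs; split => //; exact: SV_open.
Qed.

Lemma piX_cont m G (X : topologicalType) (act : (seq nat -> seq nat) -> X -> X) :
  @H4 m G X act -> continuous (piX m G act).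
Proof.
move=> H x; apply/pointwise_cvgP => t A /= At.
apply: (filterS _ (Vx_loc x t.+1 H)) => y /= e.
by rewrite /piX e; apply: At.
Qed.

Lemma piX_boundary m G (X : topologicalType) (act : (seq nat -> seq nat) -> X -> X) x :
  @H4 m G X act -> boundary m (piX m G act x).
Proof.
move=> H n; have [h1 h2 _] := Vx_spec x n.+1 H.
by apply: h1; rewrite h2.
Qed.

Lemma piX_equiv m G (X : topologicalType) (act : (seq nat -> seq nat) -> X -> X) g x :
  @H4 m G X act -> G g -> piX m G act (act g x) = bact g (piX m G act x).
Proof.
move=> H Gg; apply: funext => n.
by rewrite /bact mkseq_pi // /piX (Vx_act x n.+1 H Gg).
Qed.

Lemma piX_eq m G (X : topologicalType) (act : (seq nat -> seq nat) -> X -> X) x (z : {ptws nat -> nat}) :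
  @H4 m G X act -> (forall n, Vx m G act x n = mkseq z n) -> piX m G act x = z.
Proof. by move=> H h; apply: funext => n; rewrite /piX h nth_mkseq. Qed.

Lemma piX_surj m G (X : topologicalType) (act : (seq nat -> seq nat) -> X -> X) z :
  @H4 m G X act -> boundary m z -> exists x, piX m G act x = z.
Proof.
move=> H hz.
pose F n := [set x | Vx m G act x n = mkseq z n].
have Fdec : forall j n, (j <= n)%N -> F n `<=` F j.
  move=> j n hj x; rewrite /F /= (Vx_take x H hj) => ->.
  apply: (@eq_from_nth _ 0%N); first by rewrite size_takel ?size_mkseq.
  move=> i; rewrite size_takel ?size_mkseq // => hi.
  by rewrite nth_take // !nth_mkseq // (leq_trans hi hj).
have Fne : forall n, F n !=set0.
  move=> n; have [_ _ _ hr] := hwb H.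
  have [a ra na] := hr _ (boundary_vertex (n:=n) hz).
  have [y hy] := moves (hfa H) ra.1 na.
  exists y; rewrite /F /=.
  have := Vx_uniq H (boundary_vertex (n:=n) hz) (ex_intro _ a (conj ra hy)).
  by rewrite size_mkseq.
have Fcl : forall n, closed (F n).
  move=> n; rewrite -[F n]setCK; apply: open_closedC; apply: open_local.
  move=> x nFx; exists (SV m G act (Vx m G act x n)); split.
  - exact: SV_open.
  - by have [_ _ h3] := Vx_spec x n H.
  - move=> y Sy Fy; apply: nFx; rewrite /F /= -Fy.
    have [h1 h2 h3] := Vx_spec x n H.
    by have := Vx_uniq H h1 Sy; rewrite h2 => ->.
pose Fl := filter_from [set: nat] F.
have FlF : Filter Fl.
  apply: filter_from_filter; first by exists 0%N.
  move=> i j _ _; exists (maxn i j) => //.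
  by move=> x Fx; split; apply: (Fdec _ (maxn i j)) => //; rewrite ?leq_maxl ?leq_maxr.
have FlP : ProperFilter Fl by apply: filter_from_proper => // i _; exact: Fne.
have cX : compact [set: X] by case: (hgs H).
have [|p [_ clp]] := cX Fl FlP.
  by exists 0%N => //.
exists p; apply: piX_eq => // n.
have : closure (F n) p.
  by move=> B nB; apply: clp => //; exists n.
by move/(Fcl n).
Qed.

Lemma piX_hp m G (X : topologicalType) (act : (seq nat -> seq nat) -> X -> X) (U : set X) :
  @H4 m G X act -> open U -> U !=set0 ->
  exists2 z, boundary m z & piX m G act @^-1` [set z] `<=` U.
Proof.
move=> H oU nU; have HG := H4G H; have [_ hm _ _] := hwb H.
have [k [Gk hk] nk] := hms H oU nU.
have [u ku] : exists u, k u <> u.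
  apply: contrapT => hn; apply: nk; apply: funext => u; apply: contrapT => h.
  by apply: hn; exists u.
have ak := Gaut HG Gk.
have hu : vertex m u by apply: contrapT => nv; apply: ku; case: ak => h1 _ _ _ _; apply: h1.
exists (ext u); first exact: ext_boundary.
move=> x /= hx; apply: contrapT => nUx.
have e1 : Vx m G act x (size u) = u by rewrite -(mkseq_pi _ _ H) hx mkseq_ext.
have [h1 h2 h3] := Vx_spec x (size u) H; rewrite e1 in h1 h3.
have := SV_conj H Gk hu h3; rewrite (hk _ nUx) => h4.
have hku : vertex m (k u) by case: ak => _ h _ _ _; apply: h.
by apply: ku; apply: (SV_uniq H hku hu (size_aut ak hu) h4 h3).
Qed.

Lemma forward m G (X : topologicalType) (act : (seq nat -> seq nat) -> X -> X) :
  @H4 m G X act -> exists pi, highly_proximal_ext m G act pi.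
Proof.
move=> H; exists (piX m G act); split.
- exact: piX_cont.
- by move=> x; exact: piX_boundary.
- by move=> z hz; exact: piX_surj.
- by move=> g x Gg; exact: piX_equiv.
- by move=> U oU nU; exact: piX_hp.
Qed.


Lemma ptws_hausdorff : hausdorff_space {ptws nat -> nat}.
Proof. exact: (hausdorff_product (fun _ => order_hausdorff)). Qed.

Lemma take_mkseq (f : nat -> nat) k n : take k (mkseq f n) = mkseq f (minn k n).
Proof. by rewrite /mkseq -map_take take_iota. Qed.

Lemma cyl_near (z : {ptws nat -> nat}) n :
  nbhs z [set xi : {ptws nat -> nat} | mkseq xi n = mkseq z n].
Proof.
have hc : forall t, nbhs z [set xi : {ptws nat -> nat} | xi t = z t].
  move=> t; have : nbhs z --> z by [].
  move/(@pointwise_cvgP _ _ (nbhs z) z (nbhs_filter z)) => /(_ t).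
  move=> h; apply: (h [set y | y = z t]) => /=; by move=> y.
elim: n => [|n IH]; first by apply: (filterS _ filterT) => xi _.
apply: filterS (filterI IH (hc n)) => xi [h1 h2] /=.
by rewrite !mkseqS h1 h2.
Qed.

Lemma cyl_nbhs (z : {ptws nat -> nat}) (B : set {ptws nat -> nat}) : nbhs z B ->
  exists n, forall xi : {ptws nat -> nat}, mkseq xi n = mkseq z n -> B xi.
Proof.
pose cyl n := [set xi : {ptws nat -> nat} | mkseq xi n = mkseq z n].
pose F := filter_from [set: nat] cyl.
have FF : Filter F.
  apply: filter_from_filter; first by exists 0%N.
  move=> i j _ _; exists (maxn i j) => // xi h; rewrite /cyl /=.
  have e : forall k, (k <= maxn i j)%N -> mkseq xi k = mkseq z k.
    move=> k hk; have := congr1 (take k) h.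
    by rewrite !take_mkseq (minn_idPl hk).
  by split; apply: e; rewrite ?leq_maxl ?leq_maxr.
have cv : F --> z.
  apply/(@pointwise_cvgP _ _ F z FF) => t A /= At.
  exists t.+1 => // xi /= h; apply: At.
  by have := congr1 (fun s => nth 0%N s t) h; rewrite !nth_mkseq.
by move=> /cv [n _ hn]; exists n => xi h; apply: hn.
Qed.

Lemma bact_fix m g v (z : {ptws nat -> nat}) : is_aut m g -> fixout m v g ->
  boundary m z -> mkseq z (size v) <> v -> bact g z = z.
Proof.
move=> ag fg hz ne; apply: funext => n; rewrite /bact (fg (mkseq z n.+1)) ?nth_mkseq //.
  exact: boundary_vertex.
rewrite /below take_mkseq => e; apply: ne.
case: (leqP (size v) n.+1) => h; first by move: e; rewrite (minn_idPl h).
by move: e; rewrite (minn_idPr (ltnW h)) => e; have := congr1 size e; rewrite size_mkseq => ee; rewrite ee ltnn in h.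
Qed.

Lemma cyl_open n v : open [set xi : {ptws nat -> nat} | mkseq xi n <> v].
Proof.
by rewrite openE => xi hxi; apply: filterS (cyl_near xi n) => zeta /= ->.
Qed.


Lemma hp_fix m G (X : topologicalType) (act : (seq nat -> seq nat) -> X -> X) pi g v x :
  aut_subgroup m G -> is_Gspace G act -> highly_proximal_ext m G act pi ->
  rist_vertex m G v g -> mkseq (pi x) (size v) <> v -> act g x = x.
Proof.
move=> HG HX [pc pb ps pe php] [Gg fg] hx; apply: contrapT => ne.
have hH : hausdorff_space X by case: HX.
have [U0 [oU Ux hU]] := sep hH (act_cont HX Gg) (@cont_id X) ne.
pose O' := pi @^-1` [set xi : {ptws nat -> nat} | mkseq xi (size v) <> v].
have oO : open O' by apply: open_comp; [move=> y _; exact: pc|exact: cyl_open].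
have [z' hz' hf] := php (U0 `&` O') (openI oU oO) (ex_intro _ x (conj Ux hx)).
have [x' ex'] := ps z' hz'.
have Fx' : (U0 `&` O') x' by apply: hf.
have bz : bact g z' = z'.
  by apply: (bact_fix (Gaut HG Gg) fg hz'); rewrite -ex'; case: Fx'.
have F2 : (U0 `&` O') (act g x') by apply: hf; rewrite /= pe // ex' bz.
by case: Fx' => U1 _; case: F2 => U2 _; exact: (hU x' (act g x') U1 U2).
Qed.

Lemma reverse m G (X : topologicalType) (act : (seq nat -> seq nat) -> X -> X) pi :
  weakly_branch m G -> is_Gspace G act -> highly_proximal_ext m G act pi ->
  minimal_action G act /\ faithful_action G act /\ micro_supported G act.
Proof.
move=> HW HX Hp; have [HG hm ht hr] := HW.
have [pc pb ps pe php] := Hp.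
have cX : compact [set: X] by case: HX.
have img_closed : forall C : set X, closed C -> closed (pi @` C).
  move=> C clC; apply: compact_closed; first exact: ptws_hausdorff.
  apply: continuous_compact; first exact: continuous_subspaceT.
  exact: (subclosed_compact clC cX).
split; [split|split].
- have [x _] := ps (ext [::]) (ext_boundary hm (vertex_nil m)).
  by exists x.
- move=> C clC invC.
  case: (pselect (C = set0)) => [->|C0]; [by left|right].
  apply: contrapT => CT.
  have [c Cc] : exists c, C c.
    apply: contrapT => h; apply: C0; rewrite predeqE => y; split => // Cy.
    by apply: h; exists y.
  have [u nCu] : exists u, ~ C u.
    apply: contrapT => h; apply: CT; rewrite predeqE => y; split => // _.
    by apply: contrapT => nC; apply: h; exists y.
  have oU : open (~` C) by rewrite openC.
  have [z hz hf] := php (~` C) oU (ex_intro _ u nCu).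
  have : (pi @` C) z.
    apply: (img_closed C clC) => B nB.
    have [n hn] := cyl_nbhs nB.
    have sz : size (mkseq (pi c) n) = size (mkseq z n) by rewrite !size_mkseq.
    have [g Gg eg] := ht (mkseq (pi c) n) (mkseq z n) (boundary_vertex (pb c))
      (boundary_vertex hz) sz.
    exists (pi (act g c)); split; first by exists (act g c) => //; exact: invC.
    by apply: hn; rewrite pe // (mkseq_bact n (Gaut HG Gg) (pb c)) eg.
  by move=> [c' Cc' e]; exact: (hf c' e Cc').
- move=> g Gg eg; apply: funext => u; have ag := Gaut HG Gg.
  case: (pselect (vertex m u)) => hu; last by case: ag => h1 _ _ _ _; exact: h1.
  have hb := ext_boundary hm hu.
  have [x ex] := ps (ext u) hb.
  have bz : bact g (ext u) = ext u by rewrite -ex -pe // eg.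
  by rewrite -{1}(mkseq_ext u) -(mkseq_bact _ ag hb) bz mkseq_ext.
- move=> U oU nU; have [z hz hf] := php U oU nU.
  have cU : closed (~` U) by rewrite closedC.
  have clK := img_closed (~` U) cU.
  have nz : ~ (pi @` (~` U)) z by move=> [x nUx e]; apply: nUx; exact: hf.
  have : nbhs z (~` (pi @` (~` U))).
    by apply: open_nbhs_nbhs; split => //; rewrite openC.
  move=> /cyl_nbhs [n hn].
  have hv := boundary_vertex (n:=n) hz.
  have [g rg ng] := hr _ hv.
  exists g => //; split; first exact: rg.1.
  move=> x nUx; apply: (hp_fix HG HX Hp rg).
  rewrite size_mkseq => e; apply: (hn (pi x) e).
  by exists x.
Qed.

Unset Implicit Arguments.

Theorem corollary5p35 (m : nat -> nat) (G : set (seq nat -> seq nat)) :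
  weakly_branch m G ->
  forall (X : topologicalType) (act : (seq nat -> seq nat) -> X -> X),
    is_Gspace G act ->
    (minimal_action G act /\ faithful_action G act /\ micro_supported G act) <->
    (exists pi : X -> {ptws nat -> nat}, highly_proximal_ext m G act pi).
Proof.
move=> HW X act HX; split.
- move=> [Hmin [Hf Hm]]; exact: (forward (Build_H4 HW HX Hmin Hf Hm)).
- by move=> [pi Hp]; exact: (reverse HW HX Hp).
Qed.
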